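(* Let $T_1$ and $T_2$ be completely nonunitary contractions. If the algebra $H^\infty(T_1\oplus T_2)$ has the closability property, then so do $H^\infty(T_1)$ and $H^\infty(T_2)$.
   Context: A contraction is completely nonunitary if it has no nontrivial unitary direct summand; $u\mapsto u(T)$ is its Sz.-Nagy–Foias $H^\infty$ functional calculus and $H^\infty(T)=\{u(T):u\in H^\infty\}$. A unital algebra has the closability property if every densely defined linear transformation commuting with it (domain dense and invariant, commuting on the domain) is closable, i.e. the closure of its graph is a graph. *)

(* Defs.v *)
From HB Require Import structures.
From mathcomp Require Import all_boot all_order all_algebra.
From mathcomp Require Import reals.
From mathcomp Require Import complex.
Set Implicit Arguments. Unset Strict Implicit. Unset Printing Implicit Defensive.
Import Order.TTheory GRing.Theory Num.Theory.
Local Open Scope ring_scope.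
Local Open Scope complex_scope.

Section Hilbert.
Variable R : realType.
Local Notation C := R[i].
Variable V : lmodType C.
(* ip : the inner product (linear in the first variable) *)
Variable ip : V -> V -> C.

Definition vnorm (x : V) : R := Num.sqrt (complex.Re (ip x x)).

Definition cauchy_seq (s : nat -> V) : Prop :=
  forall eps : R, 0 < eps -> exists N : nat,
    forall m n : nat, (N <= m)%N -> (N <= n)%N -> vnorm (s m - s n) < eps.

Definition seq_to (s : nat -> V) (x : V) : Prop :=
  forall eps : R, 0 < eps -> exists N : nat,
    forall n : nat, (N <= n)%N -> vnorm (s n - x) < eps.

Definition hilbert : Prop :=
  [/\ (forall (a : C) (x y z : V), ip (a *: x + y) z = a * ip x z + ip y z),
      (forall x y : V, ip y x = (ip x y)^*),
      (forall x : V, 0 <= ip x x),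
      (forall x : V, ip x x = 0 -> x = 0) &
      (forall s : nat -> V, cauchy_seq s -> exists x, seq_to s x)].

Definition linear_op (T : V -> V) : Prop :=
  forall (a : C) (x y : V), T (a *: x + y) = a *: T x + T y.

Definition contraction (T : V -> V) : Prop :=
  linear_op T /\ forall x : V, vnorm (T x) <= vnorm x.

Definition subspace (M : V -> Prop) : Prop :=
  M 0 /\ forall (a : C) (x y : V), M x -> M y -> M (a *: x + y).

Definition closed_set (M : V -> Prop) : Prop :=
  forall x : V, (forall eps : R, 0 < eps -> exists m, M m /\ vnorm (x - m) < eps)
    -> M x.

Definition orth (M : V -> Prop) (x : V) : Prop := forall m, M m -> ip x m = 0.

(* T has no nonzero reducing subspace M on which T is unitary *)
Definition cnu (T : V -> V) : Prop :=
  forall M : V -> Prop, subspace M -> closed_set M ->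
    (forall x, M x -> M (T x)) ->
    (forall x, orth M x -> orth M (T x)) ->
    (forall x, M x -> vnorm (T x) = vnorm x) ->
    (forall y, M y -> exists x, M x /\ T x = y) ->
    forall x, M x -> x = 0.

(* H^oo, through Taylor coefficients: a : nat -> C is the coefficient sequence
   of a bounded holomorphic function on the open unit disc *)
Definition cseries_to (c : nat -> C) (s : C) : Prop :=
  forall eps : R, 0 < eps -> exists N : nat,
    forall n : nat, (N <= n)%N -> `|\sum_(k < n) c k - s| < eps%:C.

Definition Hinf (a : nat -> C) : Prop :=
  exists M : R, forall z : C, `|z| < 1 ->
    exists s : C, cseries_to (fun n => a n * z ^+ n) s /\ `|s| <= M%:C.

Definition vseries_to (c : nat -> V) (y : V) : Prop :=
  seq_to (fun n => \sum_(k < n) c k) y.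

(* Sz.-Nagy--Foias calculus: u(T) x = lim_{r -> 1-} u_r(T) x, where
   u_r(T) x = sum_n a_n r^n T^n x *)
Definition funcalc (T : V -> V) (a : nat -> C) (S : V -> V) : Prop :=
  forall x : V, exists Y : R -> V,
    (forall r : R, 0 < r < 1 ->
       vseries_to (fun n => (a n * (r ^+ n)%:C) *: iter n T x) (Y r)) /\
    (forall eps : R, 0 < eps -> exists d : R, 0 < d /\
       forall r : R, 1 - d < r < 1 -> vnorm (Y r - S x) < eps).

Definition Hinf_alg (T : V -> V) (S : V -> V) : Prop :=
  exists a : nat -> C, Hinf a /\ funcalc T a S.

Definition dense (D : V -> Prop) : Prop :=
  forall x : V, forall eps : R, 0 < eps -> exists d, D d /\ vnorm (x - d) < eps.

Definition linear_on (D : V -> Prop) (L : V -> V) : Prop :=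
  forall (a : C) (x y : V), D x -> D y -> L (a *: x + y) = a *: L x + L y.

Definition graph_closure (D : V -> Prop) (L : V -> V) (x y : V) : Prop :=
  forall eps : R, 0 < eps -> exists d, D d /\ vnorm (x - d) < eps /\
    vnorm (y - L d) < eps.

Definition closable (D : V -> Prop) (L : V -> V) : Prop :=
  forall x y y' : V, graph_closure D L x y -> graph_closure D L x y' -> y = y'.

Definition closability (A : (V -> V) -> Prop) : Prop :=
  forall (D : V -> Prop) (L : V -> V),
    subspace D -> dense D -> linear_on D L ->
    (forall S, A S -> forall x, D x -> D (S x)) ->
    (forall S, A S -> forall x, D x -> L (S x) = S (L x)) ->
    closable D L.

End Hilbert.

Definition ip_sum (R : realType) (V1 V2 : lmodType R[i])
  (ip1 : V1 -> V1 -> R[i]) (ip2 : V2 -> V2 -> R[i]) (p q : V1 * V2) : R[i] :=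
  ip1 p.1 q.1 + ip2 p.2 q.2.

Definition dsum (V1 V2 : Type) (T1 : V1 -> V1) (T2 : V2 -> V2) (p : V1 * V2)
  : V1 * V2 := (T1 p.1, T2 p.2).

(* Main.v *)
Require Import Defs.
From mathcomp Require Import all_boot all_order all_algebra.
From mathcomp Require Import reals complex ring lra.
Set Implicit Arguments. Unset Strict Implicit. Unset Printing Implicit Defensive.
Import Order.TTheory GRing.Theory Num.Theory.
Local Open Scope ring_scope.
Local Open Scope complex_scope.

Section Uniq.
Variable R : realType.
Variable V : lmodType R[i].
Variable ip : V -> V -> R[i].
Hypothesis H : hilbert ip.

Let q (x : V) : R := complex.Re (ip x x).

Lemma ReD_ (a b : R[i]) : complex.Re (a + b) = complex.Re a + complex.Re b.
Proof. by case: a; case: b. Qed.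

Lemma ipD1 x y z : ip (x + y) z = ip x z + ip y z.
Proof. case: H => lin _ _ _ _. by rewrite -[x + y](congr1 (fun t => t + y) (scale1r x)) lin mul1r. Qed.

Lemma ip0l z : ip 0 z = 0.
Proof. have := ipD1 0 0 z; rewrite addr0 => h. apply: (@addrI _ (ip 0 z)). by rewrite addr0 -h. Qed.

Lemma ipN1 x z : ip (- x) z = - ip x z.
Proof.
case: H => lin _ _ _ _.
have := lin (-1) x 0 z. by rewrite addr0 scaleN1r ip0l addr0 mulN1r.
Qed.

Lemma ipD2 x y z : ip z (x + y) = ip z x + ip z y.
Proof. case: H => _ sym _ _ _. by rewrite (sym (x+y) z) ipD1 rmorphD (sym x z) (sym y z). Qed.

Lemma ipN2 x z : ip z (- x) = - ip z x.
Proof. case: H => _ sym _ _ _. by rewrite (sym (-x) z) ipN1 rmorphN (sym x z). Qed.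

Lemma q_ge0 x : 0 <= q x.
Proof. case: H => _ _ pos _ _. by have := pos x; rewrite lecE => /andP[]. Qed.

Lemma qN x : q (- x) = q x.
Proof. by rewrite /q ipN1 ipN2 opprK. Qed.

Lemma q_par x y : q (x + y) <= 2 * q x + 2 * q y.
Proof.
have e : ip (x + y) (x + y) + ip (x - y) (x - y) = 2 * ip x x + 2 * ip y y.
  rewrite !ipD1 !ipD2 !ipN1 !ipN2. ring.
have e' : q (x + y) + q (x - y) = 2 * q x + 2 * q y.
  rewrite /q -ReD_ e ReD_.
  have h2 : forall c : R[i], complex.Re (2 * c) = 2 * complex.Re c.
    by case=> a b /=; ring.
  by rewrite !h2.
rewrite -e' lerDl. exact: q_ge0.
Qed.

Lemma vnorm_lt x eps : 0 < eps -> vnorm ip x < eps -> q x < eps ^+ 2.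
Proof.
move=> he; rewrite /vnorm -/(q x) => h.
by rewrite -ltr_sqrt ?exprn_gt0 // sqrtr_sqr gtr0_norm.
Qed.

Lemma uniq_lim u v :
  (forall eps : R, 0 < eps -> exists s, vnorm ip (s - u) < eps /\ vnorm ip (s - v) < eps) ->
  u = v.
Proof.
move=> hl.
have hq : forall eps : R, 0 < eps -> q (u - v) < 4 * eps ^+ 2.
  move=> eps he; case: (hl eps he) => s [h1 h2].
  have -> : u - v = (s - v) + - (s - u) by rewrite opprB [RHS]addrC addrA subrK.
  apply: le_lt_trans (q_par _ _) _.
  rewrite qN.
  have := vnorm_lt he h1; have := vnorm_lt he h2. lra.
have q0 : q (u - v) = 0.
  apply/eqP; rewrite eq_le q_ge0 andbT; rewrite leNgt; apply/negP => hp.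
  have hs : 0 < Num.sqrt (q (u - v)) / 4 by rewrite divr_gt0 // sqrtr_gt0.
  have := hq _ hs. rewrite expr_div_n sqr_sqrtr ?q_ge0 //. lra.
case: H => _ _ pos def _.
apply/eqP; rewrite -subr_eq0; apply/eqP; apply: def.
move: (pos (u - v)) q0; rewrite /q lecE.
case: (ip (u - v) (u - v)) => a b /= /andP[/eqP hb _] ha.
by rewrite ha hb.
Qed.

End Uniq.

Section Proj.
Variable R : realType.
Variables W V : lmodType R[i].
Variable ipW : W -> W -> R[i].
Variable ipV : V -> V -> R[i].
Variable TW : W -> W.
Variable TV : V -> V.
Variable pi : W -> V.
Hypothesis piD : forall x y, pi (x + y) = pi x + pi y.
Hypothesis pi0 : pi 0 = 0.
Hypothesis piN : forall x, pi (- x) = - pi x.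
Hypothesis piZ : forall a x, pi (a *: x) = a *: pi x.
Hypothesis piT : forall x, pi (TW x) = TV (pi x).
Hypothesis piV : forall x, vnorm ipV (pi x) <= vnorm ipW x.

Lemma pi_iter n x : pi (iter n TW x) = iter n TV (pi x).
Proof. by elim: n => //= n <-; rewrite piT. Qed.

Lemma pi_sum n (c : nat -> W) : pi (\sum_(k < n) c k) = \sum_(k < n) pi (c k).
Proof. exact: (big_morph pi piD pi0). Qed.

Lemma funcalc_proj a (S : W -> W) : funcalc ipW TW a S -> forall q, exists Y1 : R -> V,
  (forall r : R, 0 < r < 1 ->
     vseries_to ipV (fun n => (a n * (r ^+ n)%:C) *: iter n TV (pi q)) (Y1 r)) /\
  (forall eps : R, 0 < eps -> exists d : R, 0 < d /\
     forall r : R, 1 - d < r < 1 -> vnorm ipV (Y1 r - pi (S q)) < eps).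
Proof.
move=> hf q; case: (hf q) => Y [h1 h2].
exists (fun r => pi (Y r)); split.
- move=> r hr eps he; case: (h1 r hr eps he) => N hN; exists N => n hn.
  apply: le_lt_trans (hN n hn).
  apply: le_trans (piV _). rewrite /= piD piN (big_morph pi piD pi0).
  under [X in _ <= vnorm ipV (X + _)]eq_bigr do rewrite piZ pi_iter.
  by [].
- move=> eps he; case: (h2 eps he) => d [hd hd']; exists d; split => // r hr.
  apply: le_lt_trans (hd' r hr).
  apply: le_trans (piV _). by rewrite /= piD piN.
Qed.

Lemma Hinf_proj (S : W -> W) (iota : V -> W) : (forall x, pi (iota x) = x) ->
  Hinf_alg ipW TW S -> Hinf_alg ipV TV (fun x => pi (S (iota x))).
Proof.
move=> hi [a [ha hf]]; exists a; split => // x.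
case: (funcalc_proj hf (iota x)) => Y; rewrite hi => h; by exists Y.
Qed.

Hypothesis HV : hilbert ipV.

Lemma proj_local (S : W -> W) p q : Hinf_alg ipW TW S -> pi p = pi q ->
  pi (S p) = pi (S q).
Proof.
move=> [a [ha hf]] epq.
case: (funcalc_proj hf p) => Y1 [s1 l1].
case: (funcalc_proj hf q) => Y2 [s2 l2].
rewrite -epq in s2.
have eY : forall r : R, 0 < r < 1 -> Y1 r = Y2 r.
  move=> r hr; apply: (uniq_lim HV) => eps he.
  case: (s1 r hr eps he) => N1 h1; case: (s2 r hr eps he) => N2 h2.
  exists (\sum_(k < maxn N1 N2) (a k * (r ^+ k)%:C) *: iter k TV (pi p)); split.
  + by apply: h1; rewrite leq_maxl.
  + by apply: h2; rewrite leq_maxr.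
apply: (uniq_lim HV) => eps he.
case: (l1 eps he) => d1 [hd1 k1]; case: (l2 eps he) => d2 [hd2 k2].
set m := Num.min (Num.min d1 d2) 1.
have hm0 : 0 < m by rewrite !lt_min hd1 hd2 ltr01.
have hm1 : m <= d1 by rewrite /m !ge_min lexx.
have hm2 : m <= d2 by rewrite /m !ge_min lexx orbT.
have hm3 : m <= 1 by rewrite /m ge_min lexx orbT.
have hr : 0 < 1 - m / 2 < 1 by apply/andP; split; lra.
exists (Y1 (1 - m / 2)); split.
- apply: k1; apply/andP; split; lra.
- rewrite eY //; apply: k2; apply/andP; split; lra.
Qed.

End Proj.

Section Main.
Variable R : realType.
Variables V1 V2 : lmodType R[i].
Variable ip1 : V1 -> V1 -> R[i].
Variable ip2 : V2 -> V2 -> R[i].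
Variables (T1 : V1 -> V1) (T2 : V2 -> V2).
Hypothesis H1 : hilbert ip1.
Hypothesis H2 : hilbert ip2.
Let ipS := ip_sum ip1 ip2.
Let TS := dsum T1 T2.

Lemma Re_ge0_ (z : R[i]) : 0 <= z -> 0 <= complex.Re z.
Proof. by rewrite lecE => /andP[]. Qed.

Lemma vS1 (p : V1 * V2) : vnorm ip1 p.1 <= vnorm ipS p.
Proof.
rewrite /vnorm /ipS /ip_sum ReD_; apply: ler_wsqrtr; rewrite lerDl.
by case: H2 => _ _ pos _ _; apply: Re_ge0_.
Qed.

Lemma vS2 (p : V1 * V2) : vnorm ip2 p.2 <= vnorm ipS p.
Proof.
rewrite /vnorm /ipS /ip_sum ReD_; apply: ler_wsqrtr; rewrite lerDr.
by case: H1 => _ _ pos _ _; apply: Re_ge0_.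
Qed.

Lemma vS10 (w : V1) : vnorm ipS (w, 0) = vnorm ip1 w.
Proof. by rewrite /vnorm /ipS /ip_sum /= ip0l // addr0. Qed.

Lemma vS20 (w : V2) : vnorm ipS (0, w) = vnorm ip2 w.
Proof. by rewrite /vnorm /ipS /ip_sum /= ip0l // add0r. Qed.

Lemma loc1 S p q : Hinf_alg ipS TS S -> p.1 = q.1 -> (S p).1 = (S q).1.
Proof.
apply: (@proj_local R _ _ ipS ip1 TS T1 fst) => //; exact: vS1.
Qed.

Lemma loc2 S p q : Hinf_alg ipS TS S -> p.2 = q.2 -> (S p).2 = (S q).2.
Proof.
apply: (@proj_local R _ _ ipS ip2 TS T2 snd) => //; exact: vS2.
Qed.

Lemma hinf1 S : Hinf_alg ipS TS S -> Hinf_alg ip1 T1 (fun x => (S (x, 0)).1).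
Proof. apply: (@Hinf_proj R _ _ ipS ip1 TS T1 fst) => //; exact: vS1. Qed.

Lemma hinf2 S : Hinf_alg ipS TS S -> Hinf_alg ip2 T2 (fun x => (S (0, x)).2).
Proof. apply: (@Hinf_proj R _ _ ipS ip2 TS T2 snd) => //; exact: vS2. Qed.

Lemma close1 : closability ipS (Hinf_alg ipS TS) -> closability ip1 (Hinf_alg ip1 T1).
Proof.
move=> HC D L sD dD lD inv comm.
pose D' := fun p : V1 * V2 => D p.1.
pose L' := fun p : V1 * V2 => (L p.1, p.2).
have cl : closable ipS D' L'.
  apply: HC.
  - by case: sD => h0 hs; split => // a x y; apply: hs.
  - move=> x eps he; case: (dD x.1 eps he) => d [hd hv].
    exists (d, x.2); split => //.
    have -> : x - (d, x.2) = (x.1 - d, 0).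
      apply: (@eq_trans _ _ (x.1 - d, x.2 - x.2)); [reflexivity | by rewrite subrr].
    by rewrite vS10.
  - move=> a x y hx hy; rewrite /L' /= lD //.
  - move=> S HS p hp; rewrite /D'.
    rewrite (loc1 (q := (p.1, 0)) HS) //. exact: (inv _ (hinf1 HS)).
  - move=> S HS p hp; rewrite /L'.
    have e1 : L (S p).1 = (S (L p.1, p.2)).1.
      rewrite (loc1 (q := (p.1, 0)) HS) //.
      rewrite (comm _ (hinf1 HS)) //.
      exact: (loc1 HS).
    have e2 : (S p).2 = (S (L p.1, p.2)).2 by apply: (loc2 HS).
    by rewrite e1 e2; case: (S _).
move=> x y y' g1 g2.
have tr : forall z, graph_closure ip1 D L x z -> graph_closure ipS D' L' (x, 0) (z, 0).
  move=> z g eps he; case: (g eps he) => d [hd [h1 h2]].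
  exists (d, 0); split => //.
  have -> : ((x, 0) - (d, 0) : V1 * V2) = (x - d, 0).
    apply: (@eq_trans _ _ (x - d, 0 - 0)); [reflexivity | by rewrite subrr].
  have -> : ((z, 0) - L' (d, 0) : V1 * V2) = (z - L d, 0).
    apply: (@eq_trans _ _ (z - L d, 0 - 0)); [reflexivity | by rewrite subrr].
  by rewrite !vS10.
have := cl _ _ _ (tr _ g1) (tr _ g2). by case.
Qed.

Lemma close2 : closability ipS (Hinf_alg ipS TS) -> closability ip2 (Hinf_alg ip2 T2).
Proof.
move=> HC D L sD dD lD inv comm.
pose D' := fun p : V1 * V2 => D p.2.
pose L' := fun p : V1 * V2 => (p.1, L p.2).
have cl : closable ipS D' L'.
  apply: HC.
  - by case: sD => h0 hs; split => // a x y; apply: hs.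
  - move=> x eps he; case: (dD x.2 eps he) => d [hd hv].
    exists (x.1, d); split => //.
    have -> : x - (x.1, d) = (0, x.2 - d).
      apply: (@eq_trans _ _ (x.1 - x.1, x.2 - d)); [reflexivity | by rewrite subrr].
    by rewrite vS20.
  - move=> a x y hx hy; rewrite /L' /= lD //.
  - move=> S HS p hp; rewrite /D'.
    rewrite (loc2 (q := (0, p.2)) HS) //. exact: (inv _ (hinf2 HS)).
  - move=> S HS p hp; rewrite /L'.
    have e2 : L (S p).2 = (S (p.1, L p.2)).2.
      rewrite (loc2 (q := (0, p.2)) HS) //.
      rewrite (comm _ (hinf2 HS)) //.
      exact: (loc2 HS).
    have e1 : (S p).1 = (S (p.1, L p.2)).1 by apply: (loc1 HS).
    by rewrite e1 e2; case: (S _).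
move=> x y y' g1 g2.
have tr : forall z, graph_closure ip2 D L x z -> graph_closure ipS D' L' (0, x) (0, z).
  move=> z g eps he; case: (g eps he) => d [hd [h1 h2]].
  exists (0, d); split => //.
  have -> : ((0, x) - (0, d) : V1 * V2) = (0, x - d).
    apply: (@eq_trans _ _ (0 - 0, x - d)); [reflexivity | by rewrite subrr].
  have -> : ((0, z) - L' (0, d) : V1 * V2) = (0, z - L d).
    apply: (@eq_trans _ _ (0 - 0, z - L d)); [reflexivity | by rewrite subrr].
  by rewrite !vS20.
have := cl _ _ _ (tr _ g1) (tr _ g2). by case.
Qed.

End Main.

Theorem lemma5p6 (R : realType) (V1 V2 : lmodType R[i])
  (ip1 : V1 -> V1 -> R[i]) (ip2 : V2 -> V2 -> R[i])
  (T1 : V1 -> V1) (T2 : V2 -> V2) :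
  hilbert ip1 -> hilbert ip2 ->
  contraction ip1 T1 -> contraction ip2 T2 ->
  cnu ip1 T1 -> cnu ip2 T2 ->
  closability (ip_sum ip1 ip2) (Hinf_alg (ip_sum ip1 ip2) (dsum T1 T2)) ->
  closability ip1 (Hinf_alg ip1 T1) /\ closability ip2 (Hinf_alg ip2 T2).
Proof.
move=> H1 H2 _ _ _ _ HC; split; [exact: (close1 H1 H2 HC) | exact: (close2 H1 H2 HC)].
Qed.
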